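(* Let $Q=(q_0,\ldots,q_n)$ be a weights vector and let $V=(\mathbf{v}_0,\mathbf{v}_1,\ldots,\mathbf{v}_n)\in\mathrm{Mat}(n,n+1;\mathbb{Z})$ be a fan matrix of $\mathbb{P}(Q)$, i.e. $\sum_{j=0}^nq_j\mathbf{v}_j=0$ and $|\det(\mathbf{v}_1,\ldots,\mathbf{v}_n)|=q_0$. Then the weighted transverse matrix $(V^0)^*_Q=((V^0)^{-1})^T\cdot\delta\,\mathrm{diag}(1/q_1,\ldots,1/q_n)$, where $V^0=(\mathbf{v}_1,\ldots,\mathbf{v}_n)$ and $\delta=\mathrm{lcm}(q_0,\ldots,q_n)$, has integer entries.
   Context: A weights vector is an $(n+1)$-tuple of positive integers with gcd $1$. *)

(* Defs.v *)
From mathcomp Require Import all_boot all_order all_algebra.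
Set Implicit Arguments. Unset Strict Implicit. Unset Printing Implicit Defensive.
Import Order.TTheory GRing.Theory Num.Theory.
Local Open Scope ring_scope.

Definition weights_vector (n : nat) (Q : 'I_n.+1 -> nat) : Prop :=
  (forall i, (0 < Q i)%N) /\ (\big[gcdn/0%N]_(i < n.+1) Q i = 1%N).

Definition wlcm (n : nat) (Q : 'I_n.+1 -> nat) : nat :=
  \big[lcmn/1%N]_(i < n.+1) Q i.

Definition V0 (n : nat) (V : 'M[int]_(n, n.+1)) : 'M[int]_n :=
  \matrix_(i < n, j < n) V i (lift ord0 j).

Definition fan_matrix (n : nat) (Q : 'I_n.+1 -> nat) (V : 'M[int]_(n, n.+1)) : Prop :=
  (\sum_(j < n.+1) (Q j)%:Z *: col j V = 0) /\ `|\det (V0 V)| = (Q ord0)%:Z.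

Definition weighted_transverse (n : nat) (Q : 'I_n.+1 -> nat) (V : 'M[int]_(n, n.+1))
  : 'M[rat]_n :=
  (invmx (map_mx (fun z : int => z%:~R : rat) (V0 V)))^T
  *m ((wlcm Q)%:R *: diag_mx (\row_(j < n) ((Q (lift ord0 j))%:R)^-1)).

(* Main.v *)
Require Import Defs.
From mathcomp Require Import all_boot all_order all_algebra.
From mathcomp Require Import ring.
Import Order.TTheory GRing.Theory Num.Theory.
Local Open Scope ring_scope.

Lemma big_gcd_dvd (m : nat) (F : 'I_m -> nat) (g c : nat) :
  (forall i, (g %| F i * c)%N) -> (g %| (\big[gcdn/0%N]_(i < m) F i) * c)%N.
Proof.
move=> H; elim/big_ind: _ => //.
by move=> x y hx hy; rewrite muln_gcdl dvdn_gcd hx hy.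
Qed.

Lemma dvdz_bigsum (I : finType) (D : int) (F : I -> int) :
  (forall i, (D %| F i)%Z) -> (D %| \sum_i F i)%Z.
Proof.
move=> H; elim/big_ind: _ => //.
move=> x y /dvdzP[a ->] /dvdzP[b ->]; apply/dvdzP; exists (a + b); by rewrite mulrDl.
Qed.

Lemma dvd_det_lemma (n : nat) (A C : 'M[int]_n) (D delta : int) (j : 'I_n) :
  (forall l, (D %| delta * (A *m C) j l)%Z) ->
  forall i, (D %| delta * \det C * A j i)%Z.
Proof.
move=> H i.
have E2 : \det C * A j i = (A *m C *m \adj C) j i.
  by rewrite -mulmxA mul_mx_adj mul_mx_scalar mxE.
rewrite -mulrA E2.
rewrite mxE mulr_sumr; apply: dvdz_bigsum => l.
by rewrite mulrA; apply: dvdz_mulr.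
Qed.

Theorem mainTheorem11 (n : nat) (Q : 'I_n.+1 -> nat) (V : 'M[int]_(n, n.+1)) :
  weights_vector Q -> fan_matrix Q V ->
  exists M : 'M[int]_n,
    weighted_transverse Q V = map_mx (fun z : int => z%:~R : rat) M.
Proof.
case=> Qpos Qgcd [Hsum Hdet].
set W := V0 V.
set A := \adj W.
set d := \det W.
set del := wlcm Q.
have q0pos := Qpos ord0.
have dnz : d != 0 by rewrite -normr_eq0 Hdet -lt0n.
have dvdQ : forall m, (Q m %| del)%N by move=> m; apply: (biglcmn_sup m).
have colW : forall k, col (lift ord0 k) V = col k W.
  by move=> k; apply/matrixP=> i c; rewrite !mxE.
have Hrel : (Q ord0)%:Z *: col ord0 V = - \sum_(k < n) (Q (lift ord0 k))%:Z *: col k W.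
  move: Hsum; rewrite big_ord_recl => /eqP; rewrite addr_eq0 => /eqP ->.
  by congr (- _); apply: eq_bigr => k _; rewrite colW.
have AcolW : forall k l, (A *m col k W) l 0 = (A *m W) l k.
  by move=> k l; rewrite !mxE; apply: eq_bigr => c _; rewrite !mxE.
have E0 : forall j, (Q ord0)%:Z * (A *m col ord0 V) j 0 = - d * (Q (lift ord0 j))%:Z.
  move=> j.
  have := congr1 (fun X => (A *m X) j 0) Hrel => /=.
  rewrite -scalemxAr mxE => ->.
  rewrite mulmxN mulmx_sumr mxE summxE (bigD1 j) //= big1.
    by rewrite addr0 -scalemxAr mxE AcolW mul_adj_mx mxE eqxx mulr1n mulrC mulNr.
  by move=> k kj; rewrite -scalemxAr mxE AcolW mul_adj_mx mxE eq_sym (negbTE kj) mulr0n mulr0.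
have Hdiv : forall i j, (d * (Q (lift ord0 j))%:Z %| del%:Z * A j i)%Z.
  move=> i j.
  set D := d * (Q (lift ord0 j))%:Z.
  have HW : forall l, (D %| del%:Z * (A *m W) j l)%Z.
    move=> l; rewrite mul_adj_mx mxE; case: eqP => [_|_].
      rewrite mulr1n mulrC /D; apply: dvdz_mul; first exact: dvdzz.
      by rewrite dvdzE /=; apply: dvdQ.
    by rewrite mulr0n mulr0 dvdz0.
  have Hv0 : (D %| del%:Z * (A *m col ord0 V) j 0%R)%Z.
    have [k0 hk0] := dvdnP (dvdQ ord0).
    apply/dvdzP; exists (- k0%:Z).
    rewrite hk0 PoszM -mulrA E0 /D; ring.
  have Hm : forall (m : 'I_n.+1) (C : 'M[int]_n),
      (forall l, (D %| del%:Z * (A *m C) j l)%Z) -> (`|\det C|%N = Q m) ->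
      (`|D| %| Q m * `|(del%:Z * A j i)%R|)%N.
    move=> m C HC hdet.
    have := dvd_det_lemma _ _ _ _ _ _ HC i; rewrite dvdzE !abszM hdet.
    by rewrite mulnCA mulnA.
  have : (`|D| %| (\big[gcdn/0%N]_(m < n.+1) Q m) * `|(del%:Z * A j i)%R|)%N.
    apply: big_gcd_dvd => m.
    case: (unliftP ord0 m) => [k ->|->]; last first.
      apply: (Hm ord0 W HW).
      by apply/eqP; rewrite -eqz_nat abszE Hdet.
    pose Ck := \matrix_(a, c) (if c == k then V a ord0 else W a c) : 'M[int]_n.
    have HCk : forall l, (A *m Ck) j l = if l == k then (A *m col ord0 V) j 0 else (A *m W) j l.
      move=> l; rewrite !mxE; case: ifP => hl; apply: eq_bigr => c _; by rewrite !mxE ?hl.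
    have detCk : \det Ck = (A *m col ord0 V) k 0.
      rewrite (expand_det_col _ k) mxE; apply: eq_bigr => c _.
      rewrite !mxE eqxx mulrC; congr (_ * _).
      rewrite /cofactor; congr (_ * \det (row' c _)).
      apply/matrixP => a b; rewrite !mxE.
      by have /negbTE -> : lift k b != k by rewrite eq_sym neq_lift.
    apply: (Hm _ Ck).
      by move=> l; rewrite HCk; case: (l == k).
    have h := E0 k; rewrite -detCk in h.
    have h2 : (Q ord0)%:Z * `|\det Ck| = (Q ord0)%:Z * (Q (lift ord0 k))%:Z.
      have := congr1 Num.norm h; rewrite !normrM normrN Hdet.
      by [].
    have h3 := mulfI _ h2.
    apply/eqP; rewrite -eqz_nat abszE h3 //.
    by rewrite -lt0n.
  by rewrite Qgcd mul1n -dvdzE.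
pose M := \matrix_(i, j) ((del%:Z * A j i) %/ (d * (Q (lift ord0 j))%:Z))%Z : 'M[int]_n.
exists M; apply/matrixP => i j.
have qnz : (Q (lift ord0 j))%:Z != 0 by rewrite -lt0n.
have hM : (M i j)%:~R * ((d * (Q (lift ord0 j))%:Z)%:~R : rat) = (del%:Z * A j i)%:~R.
  by rewrite -intrM /M mxE divzK.
have Dnz : ((d * (Q (lift ord0 j))%:Z)%:~R : rat) != 0 by rewrite intr_eq0 mulf_neq0.
rewrite [RHS]mxE.
have -> : (M i j)%:~R = (del%:Z * A j i)%:~R / ((d * (Q (lift ord0 j))%:Z)%:~R : rat).
  by rewrite -hM mulfK.
rewrite /weighted_transverse.
have unitW : map_mx (fun z : int => z%:~R : rat) (V0 V) \in unitmx.
  by rewrite unitmxE unitfE det_map_mx intr_eq0.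
have hc : cofactor (map_mx (fun z : int => z%:~R : rat) (V0 V)) i j = (cofactor W i j)%:~R.
  by rewrite cofactor_map_mx.
have hd : \det (map_mx (fun z : int => z%:~R : rat) (V0 V)) = d%:~R.
  by rewrite det_map_mx.
rewrite /invmx unitW -scalemxAr mxE mul_mx_diag !mxE hc hd.
have dnz' : (d%:~R : rat) != 0 by rewrite intr_eq0.
have qnz' : ((Q (lift ord0 j))%:R : rat) != 0 by rewrite pnatr_eq0 -lt0n.
rewrite (intrM _ del%:Z) (intrM _ d).
have -> : ((Q (lift ord0 j))%:Z%:~R : rat) = (Q (lift ord0 j))%:R by [].
have -> : (del%:Z%:~R : rat) = (wlcm Q)%:R by [].
move: (cofactor W i j) => a.
move: dnz' qnz'; move: (d%:~R : rat) ((Q (lift ord0 j))%:R : rat) => x y hx hy.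
by field; rewrite hx hy.
Qed.
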